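(* For non-negative integers $n,k,\alpha,\beta$, $$\genfrac{\lfloor}{\rfloor}{0pt}{}{n+k}{n}^{\alpha,\beta}=\sum_{1\le i_1\le i_2\le\cdots\le i_k\le n}\ \prod_{j=1}^{k}\big((\alpha+\beta)i_j+\alpha(j-1)\big)=\sum_{1\le i_1\le\cdots\le i_k\le n}(\alpha+\beta)i_1\big((\alpha+\beta)i_2+\alpha\big)\cdots\big((\alpha+\beta)i_k+\alpha(k-1)\big).$$
   Context: For parameters $\alpha,\beta$, the generalized Stirling numbers $\genfrac{\lfloor}{\rfloor}{0pt}{}{n}{k}^{\alpha,\beta}$, $0\le k\le n$, are defined by the polynomial identity in $x$ $$x(x+\alpha)\cdots(x+(n-1)\alpha)=\sum_{k=0}^{n}\genfrac{\lfloor}{\rfloor}{0pt}{}{n}{k}^{\alpha,\beta}\,x(x-\beta)\cdots(x-(k-1)\beta),$$ (empty products equal $1$), and $\genfrac{\lfloor}{\rfloor}{0pt}{}{n}{k}^{\alpha,\beta}=0$ for $k<0$ or $k>n$. An empty sum is $0$ and an empty product is $1$ (so for $k=0$ the right-hand side equals $1$). *)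

(* Defs.v *)
From HB Require Import structures.
From mathcomp Require Import all_boot all_order all_algebra.
Set Implicit Arguments. Unset Strict Implicit. Unset Printing Implicit Defensive.
Import Order.TTheory GRing.Theory Num.Theory.
Local Open Scope ring_scope.

(* [is_gen_stirling a b S] : S n k are the generalized Stirling numbers with
   parameters alpha = a, beta = b, i.e. for every n the polynomial identity
   x(x+a)...(x+(n-1)a) = sum_{k=0}^n S n k * x(x-b)...(x-(k-1)b)
   holds in Z[x], and S n k = 0 for k > n. *)
Definition is_gen_stirling (a b : int) (S : nat -> nat -> int) : Prop :=
  (forall n : nat,
     \prod_(i < n) ('X + (a *+ i)%:P) =
     \sum_(k < n.+1) (S n k)%:P * \prod_(i < k) ('X - (b *+ i)%:P) :> {poly int})
  /\ (forall n k : nat, (n < k)%N -> S n k = 0).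

(* Main.v *)
Require Import Defs.
From HB Require Import structures.
From mathcomp Require Import all_boot all_order all_algebra.
From mathcomp Require Import ring zify.
Import Order.TTheory GRing.Theory Num.Theory.
Local Open Scope ring_scope.

Module M1.

Definition Pk (b : int) (k : nat) : {poly int} := \prod_(i < k) ('X - (b *+ i)%:P).

Lemma Pk_monic b k : Pk b k \is monic.
Proof. exact: monic_prod_XsubC. Qed.

Lemma Pk_size b k : size (Pk b k) = k.+1.
Proof. rewrite /Pk size_prod_XsubC; congr S.
by rewrite /index_enum -enumT size_enum_ord. Qed.

Lemma Pk_S b k : Pk b k.+1 = Pk b k * ('X - (b *+ k)%:P).
Proof. by rewrite /Pk big_ord_recr. Qed.

Lemma Pk_lead b m : (Pk b m)`_m = 1.
Proof.
have /monicP := Pk_monic b m; rewrite /lead_coef Pk_size /=.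
by [].
Qed.

Lemma uniq_coef b m (c : nat -> int) :
  \sum_(k < m) (c k)%:P * Pk b k = 0 -> forall k, (k < m)%N -> c k = 0.
Proof.
elim: m => [|m IH] // H.
have cm : c m = 0.
  have := congr1 (fun p : {poly int} => p`_m) H.
  rewrite big_ord_recr /= coefD coef_sum coef0 coefCM Pk_lead mulr1.
  rewrite big1 ?add0r //.
  move=> i _; rewrite coefCM nth_default ?mulr0 // Pk_size.
  exact: ltn_ord.
move=> k; rewrite ltnS leq_eqVlt => /orP [/eqP -> //|].
apply: IH; move: H; rewrite big_ord_recr /= cm mul0r addr0 //.
Qed.
End M1. Import M1.
Module M2.

Section Rec.
Variables (a b : int) (S : nat -> nat -> int).
Hypothesis HS : is_gen_stirling a b S.

Lemma Sfull m j : S m.+1 j = (if j is j'.+1 then S m j' else 0) + (b *+ j + a *+ m) * S m j.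
Proof.
case: HS => Hp Hz.
pose c j := S m.+1 j - ((if j is j'.+1 then S m j' else 0) + (b *+ j + a *+ m) * S m j).
suff Hc : \sum_(k < m.+2) (c k)%:P * Pk b k = 0.
  case: (ltnP j m.+2) => hj.
    by apply/eqP; rewrite -subr_eq0; apply/eqP; exact: (uniq_coef _ _ _ Hc j hj).
  case: j hj => [//|j] hj.
  by rewrite !Hz ?mulr0 ?addr0 //; apply: leq_trans hj; rewrite ?ltnS.
have E1 : \sum_(k < m.+2) (S m.+1 k)%:P * Pk b k =
   \sum_(k < m.+1) (S m k)%:P * Pk b k.+1 +
   \sum_(k < m.+1) ((b *+ k + a *+ m) * S m k)%:P * Pk b k.
  rewrite -Hp big_ord_recr /= Hp big_distrl /= -big_split /=.
  apply: eq_bigr => k _.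
  rewrite Pk_S polyCM -/(Pk b k) polyCD; ring.
under eq_bigr do rewrite polyCB polyCD mulrBl mulrDl.
rewrite sumrB big_split /= E1 [X in _ - (X + _)]big_ord_recl /= mul0r add0r.
rewrite [X in _ - (_ + X)]big_ord_recr /= (Hz m m.+1) // mulr0 mul0r addr0.
by rewrite subrr.
Qed.

End Rec.
End M2. Import M2.
Module M3.
Set Implicit Arguments. Unset Strict Implicit.

Definition ext (T : Type) (k : nat) (u : T) (f : {ffun 'I_k -> T}) : {ffun 'I_k.+1 -> T} :=
  [ffun j => if unlift ord_max j is Some j' then f j' else u].

Lemma ext_max T (k : nat) (u : T) (f : {ffun 'I_k -> T}) : ext u f ord_max = u.
Proof. by rewrite ffunE unlift_none. Qed.

Lemma ext_lift T k (u : T) (f : {ffun 'I_k -> T}) j : ext u f (lift ord_max j) = f j.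
Proof. by rewrite ffunE liftK. Qed.

Lemma widen_lift k (j : 'I_k) : widen_ord (leqnSn k) j = lift ord_max j.
Proof. by apply: val_inj; rewrite /= /bump leqNgt ltn_ord. Qed.

Definition res (T : Type) (k : nat) (g : {ffun 'I_k.+1 -> T}) : T * {ffun 'I_k -> T} :=
  (g ord_max, [ffun j => g (lift ord_max j)]).

Lemma ext_bij (T : finType) k : bijective (fun p : T * {ffun 'I_k -> T} => ext p.1 p.2).
Proof.
exists (@res T k).
  case=> u f /=; rewrite /res ext_max; congr pair.
  by apply/ffunP => j; rewrite ffunE ext_lift.
move=> g; apply/ffunP => j; rewrite ffunE /=.
by case: unliftP => [j' ->|->]; rewrite ?ffunE.
Qed.

Definition wt (a b j v : nat) : int := ((a + b) * v + a * j)%N%:Z.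

Definition condP N k (v : nat) (f : {ffun 'I_k -> 'I_N.+1}) : bool :=
  [forall j, (0 < f j)%N] && [forall i : 'I_k, forall j : 'I_k, (i <= j)%N ==> (f i <= f j)%N]
  && [forall j, (f j <= v)%N].

Definition Hs a b N k v : int :=
  \sum_(f : {ffun 'I_k -> 'I_N.+1} | condP v f) \prod_(j < k) wt a b j (f j).

Lemma cond_ext N k v (u : 'I_N.+1) (f : {ffun 'I_k -> 'I_N.+1}) :
  condP v (ext u f) = ((0 < u)%N && (u <= v)%N) && condP u f.
Proof.
rewrite /condP; apply/idP/idP.
  move=> /andP [/andP [/forallP Hp /forallP Hm] /forallP Hb].
  have := Hp ord_max; have := Hb ord_max; rewrite ext_max => -> -> /=.
  apply/andP; split; first (apply/andP; split).
  - by apply/forallP => j; have := Hp (lift ord_max j); rewrite ext_lift.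
  - apply/forallP => i; apply/forallP => j; apply/implyP => hij.
    have /forallP/(_ (lift ord_max j)) := Hm (lift ord_max i).
    by rewrite !ext_lift !lift_max hij.
  - apply/forallP => j.
    have /forallP/(_ ord_max) := Hm (lift ord_max j).
    by rewrite ext_lift ext_max lift_max /= (ltnW (ltn_ord j)).
move=> /andP [/andP [u0 uv] /andP [/andP [/forallP Hp /forallP Hm] /forallP Hb]].
apply/andP; split; first (apply/andP; split).
- apply/forallP => j; case: (unliftP ord_max j) => [j' ->|->].
    by rewrite ext_lift.
  by rewrite ext_max.
- apply/forallP => i; apply/forallP => j; apply/implyP.
  case: (unliftP ord_max i) => [i' ->|->]; case: (unliftP ord_max j) => [j' ->|->];
    rewrite ?ext_lift ?ext_max ?lift_max //=.
  + by move=> hij; have /forallP/(_ j')/implyP := Hm i'; apply.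
  + by move=> h; first [apply: Hb | move: h; rewrite /= leqNgt ltn_ord].
- apply/forallP => j; case: (unliftP ord_max j) => [j' ->|->].
    by rewrite ext_lift; apply: leq_trans (Hb j') uv.
  by rewrite ext_max.
Qed.

Lemma Hs_S a b N k v :
  Hs a b N k.+1 v = \sum_(u : 'I_N.+1 | (0 < u)%N && (u <= v)%N) wt a b k u * Hs a b N k u.
Proof.
rewrite /Hs; under [in RHS]eq_bigr do rewrite mulr_sumr.
rewrite pair_big_dep /= (reindex _ (onW_bij _ (ext_bij _ _))) /=.
apply: eq_big => [[u f]|[u f] _] /=; first exact: cond_ext.
rewrite big_ord_recr /= ext_max mulrC; congr (_ * _).
by apply: eq_bigr => j _; rewrite widen_lift ext_lift. Qed.
End M3. Import M3.

Section Main.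
Variables (a b : nat) (S : nat -> nat -> int).
Hypothesis HS : is_gen_stirling a%:Z b%:Z S.

Lemma S00 : S 0 0 = 1.
Proof.
case: HS => Hp _; move: (Hp 0%N); rewrite big_ord0 big_ord1 big_ord0 mulr1.
by move/(congr1 (fun p : {poly int} => p`_0)); rewrite !coefC /= => ->. Qed.

Lemma Sdiag m : S m m = 1.
Proof.
elim: m => [|m IH]; first exact: S00.
by rewrite (Sfull _ _ _ HS) IH (proj2 HS m m.+1) // mulr0 addr0.
Qed.

Lemma Sz k : S k.+1 0 = 0.
Proof.
elim: k => [|k IH]; first by rewrite (Sfull _ _ _ HS) mulr0n !add0r mul0r.
by rewrite (Sfull _ _ _ HS) IH mulr0 add0r.
Qed.

Lemma Hs0 N v : Hs a b N 0 v = 1.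
Proof.
rewrite /Hs (eq_bigl predT); last first.
  by move=> f; rewrite /condP; apply/andP; split; [apply/andP; split|]; apply/forallP => -[].
under eq_bigr do rewrite big_ord0.
by rewrite sumr_const card_ffun card_ord card_ord expn0.
Qed.

Lemma wtE k v : wt a b k v.+1 = b%:Z *+ v.+1 + a%:Z *+ (v.+1 + k).
Proof. by rewrite /wt -[b%:Z *+ _]mulr_natr -[a%:Z *+ _]mulr_natr !natz -!PoszM -!PoszD; congr Posz; lia. Qed.

Lemma sum_step k N v : (v <= N)%N ->
  \sum_(u : 'I_N.+1 | (0 < u)%N && (u <= v)%N) wt a b k u * S (u + k)%N u = S (v + k.+1)%N v.
Proof.
elim: v => [|v IH] hv.
  rewrite big_pred0; last by move=> u; rewrite leqn0 lt0n andNb.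
  by rewrite add0n Sz.
have hv' : (v.+1 < N.+1)%N by [].
rewrite (bigD1 (Ordinal hv')) //=.
rewrite (eq_bigl (fun u : 'I_N.+1 => (0 < u)%N && (u <= v)%N)); last first.
  move=> u; rewrite -val_eqE /=; lia.
rewrite IH ?(ltnW hv) // -addSnnS addnS (Sfull _ _ _ HS) addrC wtE.
by [].
Qed.

Lemma Hs_val N k v : (v <= N)%N -> Hs a b N k v = S (v + k)%N v.
Proof.
elim: k v => [|k IH] v hv; first by rewrite Hs0 addn0 Sdiag.
rewrite Hs_S -(sum_step _ _ _ hv); apply: eq_bigr => u /andP [_ uv].
by rewrite IH // (leq_trans uv hv).
Qed.

End Main.

Theorem theorem6 (n k a b : nat) (S : nat -> nat -> int) :
  is_gen_stirling a%:Z b%:Z S ->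
  S (n + k)%N n =
  \sum_(f : {ffun 'I_k -> 'I_n.+1} |
          [forall j, (0 < f j)%N] && [forall i : 'I_k, forall j : 'I_k, (i <= j)%N ==> (f i <= f j)%N])
     \prod_(j < k) (((a + b) * f j + a * j)%N)%:Z.
Proof.
move=> HS; rewrite -(Hs_val _ _ _ HS n k n (leqnn n)) /Hs.
apply: eq_bigl => f; rewrite /condP.
have -> : [forall j, (f j <= n)%N] by apply/forallP => j; rewrite -ltnS ltn_ord.
by rewrite andbT.
Qed.
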